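(* Let $K : \mathbb{B}^n \times \mathbb{B}^r \to \mathbb{B}$ and let $f_1, \ldots, f_r : \mathbb{B}^n \to \mathbb{B}$ be such that for all $i \in \{1,\dots,r\}$ and all $\mathbf{x}\in\mathbb B^n$, $$f_i(\mathbf{x}) = \exists u_{i+1},\ldots,u_r\; K(\mathbf{x}, f_1(\mathbf{x}), \ldots, f_{i-1}(\mathbf{x}), 1, u_{i+1}, \ldots, u_r).$$ Then for every $\mathbf{x} \in \mathrm{Dom}(K)$ we have $K(\mathbf{x}, f_1(\mathbf{x}), \ldots, f_r(\mathbf{x})) = 1$.
   Context: $\mathbb{B}=\{0,1\}$. For a boolean function $g$, $\exists y\, g$ denotes $g|_{y=0}+g|_{y=1}$ (logical OR of the two restrictions), extended to several variables by iteration. $\mathrm{Dom}(K) = \{\mathbf x \in \mathbb B^n \mid \exists \mathbf u\in\mathbb B^r\; K(\mathbf x,\mathbf u)=1\}$. *)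

(* Defs.v *)
From mathcomp Require Import all_boot.
Set Implicit Arguments. Unset Strict Implicit. Unset Printing Implicit Defensive.

(* Boolean vectors in B^n are finite functions 'I_n -> bool (0-indexed). *)
Notation bvec n := {ffun 'I_n -> bool}.

Definition Dom (n r : nat) (K : bvec n -> bvec r -> bool) (x : bvec n) : bool :=
  [exists u : bvec r, K x u].

(* The assignment (f_1(x),...,f_{i-1}(x), 1, u_{i+1},...,u_r) with 0-based i:
   coordinates j < i get f j x, coordinate i gets 1, j > i get u j. *)
Definition prefix_assign (n r : nat) (f : 'I_r -> bvec n -> bool) (x : bvec n)
  (i : 'I_r) (u : bvec r) : bvec r :=
  [ffun j : 'I_r => if (j < i)%N then f j x else if j == i then true else u j].

(* Main.v *)
Require Import Defs.
From mathcomp Require Import all_boot.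

Theorem lemma1 (n r : nat) (K : bvec n -> bvec r -> bool)
  (f : 'I_r -> bvec n -> bool) :
  (forall (i : 'I_r) (x : bvec n),
      f i x = [exists u : bvec r, K x (prefix_assign f x i u)]) ->
  forall x : bvec n, Dom K x -> K x [ffun j => f j x].
Proof.
move=> Hf x /existsP [u0 Ku0].
have inv : forall k, (k <= r)%N -> exists u : bvec r, K x u /\
    (forall j : 'I_r, (j < k)%N -> u j = f j x).
  elim=> [|k IH] Hk; first by exists u0; split.
  have [u [Ku Hu]] := IH (ltnW Hk).
  pose i : 'I_r := Ordinal Hk.
  have Hpa : forall v : bvec r, K x (prefix_assign f x i v) ->
      exists w : bvec r, K x w /\ (forall j : 'I_r, (j < k.+1)%N -> w j = f j x).
    move=> v Kv; exists (prefix_assign f x i v); split => // j Hj.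
    rewrite /prefix_assign ffunE /=.
    case: ltnP => // Hji.
    have ej : j == i by apply/eqP/val_inj => /=; apply/eqP; rewrite eqn_leq Hji -ltnS Hj.
    rewrite ej (eqP ej) Hf; apply/esym/existsP; by exists v.
  case Eu: (u i).
  - apply: (Hpa u).
    suff -> : prefix_assign f x i u = u by [].
    apply/ffunP => j; rewrite /prefix_assign ffunE /=.
    case: ltnP => Hj; first by rewrite Hu.
    case: eqP => [->|] //.
  - case Ef: (f i x).
    + move: Ef; rewrite Hf => /existsP [v Kv]; exact: Hpa Kv.
    + exists u; split => // j Hj.
      case: (ltnP j k) => Hjk; first exact: Hu.
      have -> : j = i by apply/val_inj => /=; apply/eqP; rewrite eqn_leq Hjk -ltnS Hj.
      by rewrite Eu Ef.
have [u [Ku Hu]] := inv r (leqnn r).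
suff -> : [ffun j => f j x] = u by [].
apply/ffunP => j; rewrite ffunE Hu //.
Qed.
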